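(* The set $\mathsf{NH}$ of nicely hypercyclic vectors is comeager in $\ell^2$.
   Context: $\omega=\{0,1,2,\dots\}$; $\ell^2$ is the Hilbert space of square-summable real sequences indexed by $\omega$ with its norm topology. For nonempty $q\in\mathbb Q^{<\omega}$ and rational $\varepsilon>0$, $U_{q,\varepsilon}=\{x\in\ell^2:\lVert (x\upharpoonright|q|)-q\rVert_\infty<\varepsilon|q|^{-1/2}\text{ and }\lVert x\upharpoonright[|q|,\infty)\rVert_2<\varepsilon\}$ (where $|q|$ is the length of $q$); for $q$ empty, $U_{q,\varepsilon}=\{x:\lVert x\rVert_2<\varepsilon\}$. For $w\in\mathbb R^\omega$, $B_w(x)(i)=w(i)x(i+1)$. A function $w$ on $\omega$ is $n$-nice at $k$ if $w(i)=w(k+i)$ for all $i<n$. $B_w^k$ maps $y$ nicely into $U_{q,\varepsilon}$ if $B_w^k(y)\in U_{q,\varepsilon}$, $w$ is $|q|$-nice at $k$, and $\lVert y\upharpoonright[k+|q|,\infty)\rVert_2<\varepsilon 2^{-k}$. $y\in\ell^2$ is nicely hypercyclic if there is $w\in\{1,2\}^\omega$ such that for every $U_{q,\varepsilon}$ there is $k$ with $B_w^k$ mapping $y$ nicely into $U_{q,\varepsilon}$. *)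

(* Defs.v *)
From Stdlib Require Import Reals Lra QArith List.
From Coquelicot Require Import Coquelicot.
Open Scope R_scope.

Definition seqR := nat -> R.

Definition in_l2 (x : seqR) : Prop := ex_series (fun i => (x i) ^ 2).

Definition l2norm (x : seqR) : R := sqrt (Series (fun i => (x i) ^ 2)).

Definition tailnorm (n : nat) (x : seqR) : R :=
  sqrt (Series (fun i => (x (n + i)%nat) ^ 2)).

Definition U (q : list Q) (eps : Q) (x : seqR) : Prop :=
  match q with
  | nil => l2norm x < Q2R eps
  | _ :: _ =>
      (forall i : nat, (i < length q)%nat ->
         Rabs (x i - Q2R (nth i q 0%Q)) < Q2R eps * / sqrt (INR (length q)))
      /\ tailnorm (length q) x < Q2R eps
  end.

Definition Bw (w : seqR) (x : seqR) : seqR := fun i => w i * x (S i).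
Definition Bw_iter (w : seqR) (k : nat) (x : seqR) : seqR := Nat.iter k (Bw w) x.

Definition nice (w : seqR) (n k : nat) : Prop :=
  forall i : nat, (i < n)%nat -> w i = w (k + i)%nat.

Definition maps_nicely (w : seqR) (k : nat) (y : seqR) (q : list Q) (eps : Q) : Prop :=
  U q eps (Bw_iter w k y) /\ nice w (length q) k /\
  tailnorm (k + length q) y < Q2R eps * / 2 ^ k.

Definition nicely_hypercyclic (y : seqR) : Prop :=
  in_l2 y /\
  exists w : seqR, (forall i, w i = 1 \/ w i = 2) /\
    forall (q : list Q) (eps : Q), (0 < eps)%Q ->
      exists k : nat, maps_nicely w k y q eps.

(* topology of ell^2 (norm topology), relative to the set ell^2 *)
Definition l2_open (G : seqR -> Prop) : Prop :=
  forall x, in_l2 x -> G x ->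
    exists d, 0 < d /\ forall y, in_l2 y -> l2norm (fun i => y i - x i) < d -> G y.

Definition l2_dense (G : seqR -> Prop) : Prop :=
  forall x d, in_l2 x -> 0 < d ->
    exists y, in_l2 y /\ G y /\ l2norm (fun i => y i - x i) < d.

Definition comeager_l2 (A : seqR -> Prop) : Prop :=
  exists G : nat -> seqR -> Prop,
    (forall n, l2_open (G n)) /\ (forall n, l2_dense (G n)) /\
    (forall x, in_l2 x -> (forall n, G n x) -> A x).

(* Main.v *)
Require Import Defs.
From Stdlib Require Import Reals QArith List Lra Lia Qreals Cantor.
From Coquelicot Require Import Coquelicot.
Open Scope R_scope.

Definition W : seqR := fun _ => 2.

Lemma iterW k y i : Bw_iter W k y i = 2 ^ k * y (i + k)%nat.
Proof.
  revert i; induction k; intro i.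
  - simpl. rewrite Nat.add_0_r. ring.
  - change (Bw_iter W (S k) y i) with (W i * Bw_iter W k y (S i)).
    rewrite IHk. replace (S i + k)%nat with (i + S k)%nat by lia.
    unfold W. simpl. ring.
Qed.

Lemma ex_lin (a b : nat -> R) c d : ex_series a -> ex_series b ->
  ex_series (fun n => c * a n + d * b n).
Proof.
  intros Ha Hb.
  exact (ex_series_plus _ _ (ex_series_scal_l c a Ha) (ex_series_scal_l d b Hb)).
Qed.

Lemma ex_zero : ex_series (fun _ : nat => 0).
Proof.
  assert (H : Rabs (1/2) < 1) by (rewrite Rabs_pos_eq; lra).
  refine (ex_series_ext (fun n => 0 * (1/2)^n + 0 * (1/2)^n) _ _ _).
  - intro; simpl; ring.
  - apply ex_lin; apply ex_series_geom; exact H.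
Qed.

Lemma ser_zero : Series (fun _ : nat => 0) = 0.
Proof.
  rewrite (Series_ext _ (fun n : nat => 0 * 0)) by (intro; ring).
  rewrite Series_scal_l. ring.
Qed.

Lemma ser_nonneg (a : nat -> R) : (forall n, 0 <= a n) -> ex_series a -> 0 <= Series a.
Proof.
  intros H Ha.
  assert (H1 : Series (fun n => 0 * a n) <= Series a).
  { apply Series_le; [intro n; specialize (H n); split; lra | exact Ha]. }
  rewrite Series_scal_l in H1. lra.
Qed.

Lemma ex_fin (a : nat -> R) M : (forall i, (M <= i)%nat -> a i = 0) -> ex_series a.
Proof.
  intro H. apply (proj2 (ex_series_incr_n a M)).
  refine (ex_series_ext (fun _ => 0) _ _ ex_zero). intro n; rewrite H; [reflexivity| lia].
Qed.

Lemma ex_shift (a : nat -> R) m : ex_series a -> ex_series (fun i => a (m + i)%nat).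
Proof. intro H. exact (proj1 (ex_series_incr_n a m) H). Qed.

Lemma tail_le (a : nat -> R) m : (forall n, 0 <= a n) -> ex_series a ->
  Series (fun i => a (m + i)%nat) <= Series a.
Proof.
  intros H Ha. destruct m.
  - right. apply Series_ext. reflexivity.
  - rewrite (Series_incr_n a (S m)) by (lia || exact Ha).
    pose proof (cond_pos_sum a (Init.Nat.pred (S m)) H). lra.
Qed.

Lemma term_le (a : nat -> R) j : (forall n, 0 <= a n) -> ex_series a -> a j <= Series a.
Proof.
  intros H Ha.
  rewrite (Series_incr_n a (S j)) by (lia || exact Ha).
  pose proof (ser_nonneg (fun k => a (S j + k)%nat) (fun k => H _) (ex_shift a _ Ha)).
  simpl Init.Nat.pred. destruct j; simpl.
  - simpl in *; lra.
  - simpl in *; pose proof (cond_pos_sum a j H). lra.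
Qed.

Lemma ser_shift_zero (a : nat -> R) k : (forall i, (i < k)%nat -> a i = 0) -> ex_series a ->
  Series a = Series (fun i => a (k + i)%nat).
Proof.
  intros H Ha. destruct k.
  - apply Series_ext. reflexivity.
  - rewrite (Series_incr_n a (S k)) by (lia || exact Ha).
    rewrite sum_eq_R0; [ring|]. intros n Hn. apply H. simpl in Hn. lia.
Qed.

Lemma l2_diff x y : in_l2 x -> in_l2 y -> in_l2 (fun i => y i - x i).
Proof.
  unfold in_l2. intros Hx Hy.
  apply (@ex_series_le R_AbsRing R_CompleteNormedModule _ (fun i => 2 * (y i)^2 + 2 * (x i)^2)).
  - intro n. change (norm ((y n - x n)^2)) with (Rabs ((y n - x n)^2)).
    rewrite Rabs_pos_eq by (apply pow2_ge_0). pose proof (pow2_ge_0 (y n + x n)). nra.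
  - apply ex_lin; assumption.
Qed.

Lemma sq_nonneg (x : seqR) : forall n, 0 <= (x n)^2.
Proof. intro n. nra. Qed.

Lemma tailB k m y : in_l2 y -> tailnorm m (Bw_iter W k y) = 2 ^ k * tailnorm (k + m) y.
Proof.
  intro Hy. unfold tailnorm.
  rewrite (Series_ext _ (fun i => (2^k)^2 * (y (k + m + i)%nat)^2)).
  2:{ intro i. rewrite iterW. replace (m + i + k)%nat with (k + m + i)%nat by lia. ring. }
  rewrite Series_scal_l.
  assert (H2 : 0 < 2 ^ k) by (apply pow_lt; lra).
  rewrite sqrt_mult.
  - rewrite sqrt_pow2 by lra. reflexivity.
  - nra.
  - apply (ser_nonneg (fun i => y (k+m+i)%nat ^ 2)); [intro; apply pow2_ge_0|].
    exact (ex_shift (fun i => y i ^ 2) (k+m) Hy).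
Qed.

Lemma coord_le x y j : in_l2 x -> in_l2 y ->
  Rabs (y j - x j) <= l2norm (fun i => y i - x i).
Proof.
  intros Hx Hy. unfold l2norm.
  rewrite <- (sqrt_pow2 (Rabs (y j - x j))) by apply Rabs_pos.
  apply sqrt_le_1_alt. rewrite pow2_abs.
  apply (term_le (fun i => (y i - x i)^2)); [intro; apply pow2_ge_0 | exact (l2_diff x y Hx Hy)].
Qed.

Lemma fin_conj (n : nat) (P : nat -> R -> Prop) :
  (forall i, (i < n)%nat -> exists d, 0 < d /\ forall r, r < d -> P i r) ->
  exists d, 0 < d /\ forall r, r < d -> forall i, (i < n)%nat -> P i r.
Proof.
  induction n; intro H.
  - exists 1. split; [lra|]. intros r _ i Hi. lia.
  - destruct IHn as [d1 [Hd1 H1]].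
    { intros i Hi. apply H. lia. }
    destruct (H n (Nat.lt_succ_diag_r n)) as [d2 [Hd2 H2]].
    exists (Rmin d1 d2). split; [apply Rmin_pos; assumption|].
    intros r Hr i Hi.
    assert (r < d1) by (eapply Rlt_le_trans; [exact Hr| apply Rmin_l]).
    assert (r < d2) by (eapply Rlt_le_trans; [exact Hr| apply Rmin_r]).
    destruct (Nat.eq_dec i n) as [->|Hne]; [apply H2; assumption|].
    apply H1; [assumption| lia].
Qed.

Lemma tail_open x m t : in_l2 x -> tailnorm m x < t ->
  exists d, 0 < d /\ forall y, in_l2 y -> l2norm (fun i => y i - x i) < d -> tailnorm m y < t.
Proof.
  intros Hx Ht. unfold tailnorm in Ht.
  set (A := Series (fun i => x (m+i)%nat ^2)) in *.
  assert (HA: 0 <= A) by (apply ser_nonneg; [intro; apply pow2_ge_0 | exact (ex_shift _ m Hx)]).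
  pose proof (sqrt_pos A). pose proof (sqrt_sqrt A HA).
  assert (HAt: A < t*t) by nra.
  assert (Ht0 : 0 < t) by lra.
  set (g := (t*t - A)/2). set (dl := g/(A+1)). set (e := g*dl/(dl+1)).
  assert (Hg: 0<g) by (unfold g; lra).
  assert (Hdl: 0 < dl) by (unfold dl; apply Rdiv_lt_0_compat; lra).
  assert (He: 0 < e) by (unfold e; apply Rdiv_lt_0_compat; nra).
  assert (HdlA': dl*(A+1) = g) by (unfold dl; field; lra).
  assert (HdlA: dl * A <= g) by nra.
  assert (Hee: (1 + /dl) * e = g) by (unfold e; field; lra).
  exists (sqrt e). split; [apply sqrt_lt_R0; lra|].
  intros y Hy Hd. unfold l2norm in Hd.
  set (S := Series (fun i => (y i - x i)^2)) in *.
  pose proof (l2_diff x y Hx Hy) as Hdiff.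
  assert (HS0: 0 <= S) by (apply ser_nonneg; [intro; apply pow2_ge_0| exact Hdiff]).
  assert (HSe: S < e).
  { destruct (Rlt_or_le S e) as [h|h]; auto. pose proof (sqrt_le_1_alt _ _ h). lra. }
  set (D := Series (fun i => (y (m+i)%nat - x (m+i)%nat)^2)).
  assert (HDS: D <= S) by (apply (tail_le (fun i => (y i - x i)^2)); [intro; apply pow2_ge_0| exact Hdiff]).
  assert (HB: Series (fun i => y (m+i)%nat ^2) <=
     Series (fun i => (1+dl) * x (m+i)%nat ^2 + (1+/dl) * (y (m+i)%nat - x (m+i)%nat)^2)).
  { apply Series_le.
    - intro n. split; [apply pow2_ge_0|].
      set (u := x (m+n)%nat). set (v := y (m+n)%nat).
      assert (Heq: (1+dl) * u^2 + (1+/dl) * (v-u)^2 - v^2 = (dl*u - (v-u))^2 * /dl)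
        by (field; lra).
      assert (0 <= (dl*u - (v-u))^2 * /dl).
      { apply Rmult_le_pos; [apply pow2_ge_0| left; apply Rinv_0_lt_compat; lra]. }
      lra.
    - apply ex_lin; [exact (ex_shift _ m Hx) | exact (ex_shift (fun i => (y i - x i)^2) m Hdiff)]. }
  rewrite Series_plus in HB.
  2: exact (ex_series_scal_l (1+dl) _ (ex_shift _ m Hx)).
  2: exact (ex_series_scal_l (1+/dl) _ (ex_shift (fun i => (y i - x i)^2) m Hdiff)).
  rewrite (Series_scal_l (1+dl) (fun i => x (m+i)%nat ^2)) in HB.
  rewrite (Series_scal_l (1+/dl) (fun i => (y (m+i)%nat - x (m+i)%nat)^2)) in HB.
  fold A D in HB.
  assert (Hidl : 0 < 1 + /dl) by (pose proof (Rinv_0_lt_compat dl Hdl); lra).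
  assert (HD2: (1 + /dl) * D < g).
  { apply Rle_lt_trans with ((1 + /dl) * S).
    - apply Rmult_le_compat_l; lra.
    - rewrite <- Hee. apply Rmult_lt_compat_l; lra. }
  unfold tailnorm. rewrite <- (sqrt_pow2 t) by lra.
  apply sqrt_lt_1_alt. split.
  - apply ser_nonneg; [intro; apply pow2_ge_0| exact (ex_shift (fun i => y i ^ 2) m Hy)].
  - replace (t^2) with (t*t) by ring.
    assert (H1A: (1+dl)*A <= A + g) by nra.
    assert (Hgg: A + g + g = t*t) by (unfold g; field).
    lra.
Qed.

Lemma G_open q eps k x : in_l2 x -> maps_nicely W k x q eps ->
  exists d, 0 < d /\ forall y, in_l2 y -> l2norm (fun i => y i - x i) < d ->
    maps_nicely W k y q eps.
Proof.
  intros Hx [HU [Hn Ht]].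
  destruct (tail_open x (k + length q) (Q2R eps * / 2^k) Hx Ht) as [d1 [Hd1 H1]].
  assert (H2k: 0 < 2^k) by (apply pow_lt; lra).
  assert (tailU: forall y, in_l2 y -> tailnorm (k + length q) y < Q2R eps * / 2^k ->
            tailnorm (length q) (Bw_iter W k y) < Q2R eps).
  { intros y Hy Hty. rewrite tailB by exact Hy.
    assert (Hm: 2^k * (Q2R eps * /2^k) = Q2R eps) by (field; lra).
    rewrite <- Hm. apply Rmult_lt_compat_l; assumption. }
  destruct q as [|a q'].
  - exists d1. split; auto. intros y Hy Hd. pose proof (H1 y Hy Hd) as Hty.
    split; [|split; [intros i Hi; simpl in Hi; lia | exact Hty]].
    exact (tailU y Hy Hty).
  - destruct HU as [Hc _].
    destruct (fin_conj (length (a::q')) (fun i r => forall y, in_l2 y ->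
        l2norm (fun j => y j - x j) = r ->
        Rabs (Bw_iter W k y i - Q2R (nth i (a::q') 0%Q)) < Q2R eps * / sqrt (INR (length (a::q')))))
      as [d2 [Hd2 H2]].
    { intros i Hi. specialize (Hc i Hi).
      set (s := Q2R eps * / sqrt (INR (length (a::q'))) - Rabs (Bw_iter W k x i - Q2R (nth i (a::q') 0%Q))).
      assert (Hs: 0 < s) by (unfold s; lra).
      exists (s / 2^k). split; [apply Rdiv_lt_0_compat; lra|].
      intros r Hr y Hy Hyr.
      pose proof (coord_le x y (i+k) Hx Hy) as Hco. rewrite Hyr in Hco.
      assert (Hr2: 2^k * r < s).
      { apply (Rmult_lt_compat_l (2^k)) in Hr; [|lra].
        replace (2^k * (s / 2^k)) with s in Hr by (field; lra). exact Hr. }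
      unfold s in *. rewrite iterW in *.
      set (Q := Q2R (nth i (a::q') 0%Q)) in *.
      replace (2 ^ k * y (i + k)%nat - Q) with ((2 ^ k * x (i + k)%nat - Q) + 2^k * (y (i+k)%nat - x (i+k)%nat)) by ring.
      eapply Rle_lt_trans; [apply Rabs_triang|].
      rewrite Rabs_mult, (Rabs_pos_eq (2^k)) by lra.
      assert (2^k * Rabs (y (i + k)%nat - x (i + k)%nat) <= 2^k * r) by (apply Rmult_le_compat_l; lra).
      lra. }
    exists (Rmin d1 d2). split; [apply Rmin_pos; assumption|].
    intros y Hy Hd.
    assert (Hd1' : l2norm (fun i => y i - x i) < d1) by (eapply Rlt_le_trans; [exact Hd| apply Rmin_l]).
    assert (Hd2' : l2norm (fun i => y i - x i) < d2) by (eapply Rlt_le_trans; [exact Hd| apply Rmin_r]).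
    pose proof (H1 y Hy Hd1') as Hty.
    split; [|split; [exact Hn | exact Hty]].
    split.
    + intros i Hi. exact (H2 _ Hd2' i Hi y Hy eq_refl).
    + exact (tailU y Hy Hty).
Qed.

Lemma INR_le_pow2 n : INR n <= 2 ^ n.
Proof.
  induction n; [simpl; lra|].
  rewrite S_INR. change (2 ^ S n) with (2 * 2 ^ n). pose proof (pow_R1_Rle 2 n). lra.
Qed.

Lemma G_dense q eps x d : (0 < eps)%Q -> in_l2 x -> 0 < d ->
  exists y, in_l2 y /\ (exists k, maps_nicely W k y q eps) /\ l2norm (fun i => y i - x i) < d.
Proof.
  intros He Hx Hd.
  assert (Heps: 0 < Q2R eps) by (rewrite <- RMicromega.Q2R_0; apply Qlt_Rlt; exact He).
  set (c := fun i : nat => if (i <? length q)%nat then Q2R (nth i q 0%Q) ^ 2 else 0).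
  assert (Hc: ex_series c).
  { apply (ex_fin c (length q)); intros i Hi; unfold c; destruct (Nat.ltb_spec i (length q)); [lia|reflexivity]. }
  assert (Hc0: forall i, 0 <= c i) by (intro i; unfold c; destruct (i <? length q)%nat; [apply pow2_ge_0|lra]).
  set (C := Series c).
  assert (HC0 : 0 <= C) by (apply ser_nonneg; assumption).
  set (a := fun i => x i ^2).
  pose proof (Series_correct a Hx) as Hs. apply is_series_Reals in Hs.
  destruct (Hs (d*d/4)) as [N1 HN1]; [nra|].
  destruct (INR_unbounded (4*C/(d*d))) as [N2 HN2].
  set (n := Nat.max N1 N2). set (k := S n).
  set (y := fun j => if (j <? k)%nat then x j else if (j <? k + length q)%nat then Q2R (nth (j-k) q 0%Q) / 2^k else 0).
  assert (H2k: 0 < 2^k) by (apply pow_lt; lra).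
  assert (Hy: in_l2 y).
  { apply (ex_fin _ (k + length q)). intros i Hi. unfold y.
    destruct (Nat.ltb_spec i k); [lia|]. destruct (Nat.ltb_spec i (k + length q)); [lia|]. ring. }
  exists y. split; [exact Hy|]. split.
  - exists k.
    assert (Htl: tailnorm (k + length q) y = 0).
    { unfold tailnorm. rewrite (Series_ext _ (fun _ => 0)). rewrite ser_zero; apply sqrt_0.
      intro i; unfold y. destruct (Nat.ltb_spec (k + length q + i) k); [lia|].
      destruct (Nat.ltb_spec (k + length q + i) (k + length q)); [lia|]. ring. }
    assert (HUt: tailnorm (length q) (Bw_iter W k y) < Q2R eps).
    { rewrite tailB by exact Hy. rewrite Htl, Rmult_0_r. exact Heps. }
    assert (Hco: forall i, (i < length q)%nat -> Bw_iter W k y i = Q2R (nth i q 0%Q)).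
    { intros i Hi. rewrite iterW. unfold y.
      destruct (Nat.ltb_spec (i+k) k); [lia|].
      destruct (Nat.ltb_spec (i+k) (k + length q)); [|lia].
      replace (i+k-k)%nat with i by lia. field. lra. }
    split; [|split].
    + destruct q as [|q0 q'].
      * exact HUt.
      * split; [|exact HUt]. intros i Hi. rewrite (Hco i Hi).
        replace (Q2R (nth i (q0 :: q') 0%Q) - Q2R (nth i (q0 :: q') 0%Q)) with 0 by ring.
        rewrite Rabs_R0. apply Rmult_lt_0_compat; [exact Heps|].
        apply Rinv_0_lt_compat, sqrt_lt_R0, lt_0_INR. simpl. lia.
    + intros i _. reflexivity.
    + rewrite Htl. apply Rmult_lt_0_compat; [lra | apply Rinv_0_lt_compat; exact H2k].
  - pose proof (l2_diff x y Hx Hy) as Hdiff.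
    unfold l2norm. rewrite <- (sqrt_pow2 d) by lra.
    apply sqrt_lt_1_alt. split; [apply ser_nonneg; [intro; apply pow2_ge_0|exact Hdiff]|].
    rewrite (ser_shift_zero _ k); [| |exact Hdiff].
    2:{ intros i Hi. unfold y. destruct (Nat.ltb_spec i k); [|lia]. ring. }
    set (P := (2^k)^2).
    assert (HP: 0 < P) by (unfold P; nra).
    assert (Hle: Series (fun i => (y (k+i)%nat - x (k+i)%nat)^2) <=
                 Series (fun i => (2 * /P) * c i + 2 * a (k+i)%nat)).
    { apply Series_le.
      - intro i. split; [apply pow2_ge_0|]. unfold y, c, a.
        destruct (Nat.ltb_spec (k+i) k); [lia|].
        destruct (Nat.ltb_spec i (length q)); destruct (Nat.ltb_spec (k+i) (k + length q)); try lia.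
        + replace (k+i-k)%nat with i by lia.
          set (Q := Q2R (nth i q 0%Q)). set (X := x (k+i)%nat).
          assert (HQ: (Q/2^k)^2 = /P * Q^2) by (unfold P; field; lra).
          pose proof (pow2_ge_0 (Q/2^k + X)). nra.
        + pose proof (pow2_ge_0 (x (k+i)%nat)). nra.
      - apply ex_lin; [exact Hc | exact (ex_shift a k Hx)]. }
    rewrite Series_plus in Hle.
    2: exact (ex_series_scal_l (2 * /P) _ Hc).
    2: exact (ex_series_scal_l 2 _ (ex_shift a k Hx)).
    rewrite (Series_scal_l (2 * /P) c) in Hle.
    rewrite (Series_scal_l 2 (fun i => a (k+i)%nat)) in Hle.
    fold C in Hle.
    set (T := Series (fun i => a (k+i)%nat)) in *.
    assert (HT: T < d*d/4).
    { assert (Hsplit: Series a = sum_f_R0 a n + T).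
      { unfold T. rewrite (Series_incr_n a k) by (unfold k; lia || exact Hx). reflexivity. }
      specialize (HN1 n ltac:(unfold n; lia)). unfold Rdist in HN1.
      apply Rabs_def2 in HN1. lra. }
    assert (HCP: /P * C < d*d/4).
    { assert (HkN: INR N2 <= INR k) by (apply le_INR; unfold k, n; lia).
      pose proof (INR_le_pow2 k).
      assert (Hp1: 1 <= 2^k) by (apply pow_R1_Rle; lra).
      assert (HPk: 2^k <= P) by (unfold P; nra).
      assert (Hw: 4*C/(d*d) * (d*d) = 4*C) by (field; lra).
      assert (HwP: 4*C/(d*d) < P) by lra.
      assert (H4: 4*C < P * (d*d)).
      { rewrite <- Hw. apply Rmult_lt_compat_r; [nra|exact HwP]. }
      apply (Rmult_lt_reg_l P); [lra|].
      replace (P * (/P * C)) with C by (field; lra). nra. }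
    replace (d^2) with (d*d) by ring.
    assert (2 * / P * C = 2 * (/P * C)) by ring.
    lra.
Qed.

Definition decZ (n : nat) : Z :=
  (Z.of_nat (fst (Cantor.of_nat n)) - Z.of_nat (snd (Cantor.of_nat n)))%Z.
Definition decQ (n : nat) : Q :=
  Qmake (decZ (fst (Cantor.of_nat n))) (Pos.of_nat (snd (Cantor.of_nat n))).
Fixpoint decL (l n : nat) : list Q :=
  match l with
  | O => nil
  | S l' => decQ (fst (Cantor.of_nat n)) :: decL l' (snd (Cantor.of_nat n))
  end.
Definition dec (n : nat) : list Q * Q :=
  (decL (fst (Cantor.of_nat (fst (Cantor.of_nat n)))) (snd (Cantor.of_nat (fst (Cantor.of_nat n)))),
   decQ (snd (Cantor.of_nat n))).

Lemma decZ_surj z : exists n, decZ n = z.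
Proof.
  exists (Cantor.to_nat (Z.to_nat z, Z.to_nat (- z))).
  unfold decZ. rewrite Cantor.cancel_of_to. simpl. lia.
Qed.

Lemma decQ_surj r : exists n, decQ n = r.
Proof.
  destruct r as [z p]. destruct (decZ_surj z) as [nz Hz].
  exists (Cantor.to_nat (nz, Pos.to_nat p)).
  unfold decQ. rewrite Cantor.cancel_of_to. simpl. rewrite Hz, Pos2Nat.id. reflexivity.
Qed.

Lemma decL_surj s : exists n, decL (length s) n = s.
Proof.
  induction s as [|a s IH].
  - exists O. reflexivity.
  - destruct IH as [n Hn]. destruct (decQ_surj a) as [na Ha].
    exists (Cantor.to_nat (na, n)). cbn [length decL]. rewrite Cantor.cancel_of_to. cbn [fst snd].
    rewrite Ha, Hn. reflexivity.
Qed.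

Lemma dec_surj q e : exists n, dec n = (q, e).
Proof.
  destruct (decL_surj q) as [n1 H1]. destruct (decQ_surj e) as [n2 H2].
  exists (Cantor.to_nat (Cantor.to_nat (length q, n1), n2)).
  unfold dec. rewrite !Cantor.cancel_of_to. cbn [fst snd]. rewrite !Cantor.cancel_of_to. cbn [fst snd].
  rewrite H1, H2. reflexivity.
Qed.

Theorem lemma9 : comeager_l2 nicely_hypercyclic.
Proof.
  exists (fun n y => (0 < snd (dec n))%Q -> exists k, maps_nicely W k y (fst (dec n)) (snd (dec n))).
  split; [|split].
  - intros n x Hx Gx.
    destruct (Qlt_le_dec 0 (snd (dec n))) as [Hlt|Hle].
    + destruct (Gx Hlt) as [k Hk].
      destruct (G_open _ _ k x Hx Hk) as [d [Hd H]].
      exists d. split; [exact Hd|]. intros y Hy Hyd _. exists k. exact (H y Hy Hyd).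
    + exists 1. split; [lra|]. intros y _ _ Hlt. exfalso. exact (Qlt_not_le _ _ Hlt Hle).
  - intros n x d Hx Hd.
    destruct (Qlt_le_dec 0 (snd (dec n))) as [Hlt|Hle].
    + destruct (G_dense (fst (dec n)) (snd (dec n)) x d Hlt Hx Hd) as [y [Hy [Hk Hyd]]].
      exists y. split; [exact Hy|]. split; [intros _; exact Hk| exact Hyd].
    + exists x. split; [exact Hx|]. split.
      * intros Hlt. exfalso. exact (Qlt_not_le _ _ Hlt Hle).
      * unfold l2norm. rewrite (Series_ext _ (fun _ => 0)) by (intro; ring).
        rewrite ser_zero, sqrt_0. exact Hd.
  - intros x Hx HG. split; [exact Hx|].
    exists W. split; [intro i; right; reflexivity|].
    intros q e He. destruct (dec_surj q e) as [n Hn].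
    specialize (HG n). rewrite Hn in HG. simpl in HG. exact (HG He).
Qed.
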